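(* Let $i<s<j<t$ be indices in $[1,m+n]$. Then in $U_q$ the following identities hold: $$[E_{ij},F_{st}]=(q_j^{-1}-q_j)\,K_sK_j^{-1}\,F_{jt}E_{is},\qquad [E_{st},F_{ij}]=(q_j-q_j^{-1})\,F_{is}E_{jt}\,K_s^{-1}K_j .$$
   Context: Let $m,n\ge 1$, let $q$ be an indeterminate, and let indices range over $[1,m+n]=\{1,\dots,m+n\}$. Put $q_i=q$ if $i\le m$ and $q_i=q^{-1}$ if $i>m$. Let $\mathcal I_0=\{(i,j):1\le i<j\le m \text{ or } m+1\le i<j\le m+n\}$, $\mathcal I_1=\{(i,j):1\le i\le m<j\le m+n\}$. The quantum supergroup $U_q=U_q(\mathfrak{gl}(m|n))$ is the associative $\mathbb C(q)$-superalgebra generated by $K_j^{\pm1}$ ($j\in[1,m+n]$) and $E_{i,i+1},F_{i,i+1}$ ($1\le i<m+n$), where $K_j^{\pm1}$ and $E_{i,i+1},F_{i,i+1}$ for $i\ne m$ are even and $E_{m,m+1},F_{m,m+1}$ are odd, subject to: $K_iK_j=K_jK_i$, $K_iK_i^{-1}=1$; $K_iE_{j,j+1}K_i^{-1}=q_i^{\delta_{ij}-\delta_{i,j+1}}E_{j,j+1}$, $K_iF_{j,j+1}K_i^{-1}=q_i^{-(\delta_{ij}-\delta_{i,j+1})}F_{j,j+1}$; $[E_{i,i+1},F_{j,j+1}]=\delta_{ij}\frac{K_iK_{i+1}^{-1}-K_i^{-1}K_{i+1}}{q_i-q_i^{-1}}$; $E_{m,m+1}^2=F_{m,m+1}^2=0$;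 $E_{i,i+1}E_{j,j+1}=E_{j,j+1}E_{i,i+1}$ and $F_{i,i+1}F_{j,j+1}=F_{j,j+1}F_{i,i+1}$ for $|i-j|>1$; for $|i-j|=1$, $i\neq m$, and $X\in\{E,F\}$: $X_{i,i+1}^2X_{j,j+1}-(q+q^{-1})X_{i,i+1}X_{j,j+1}X_{i,i+1}+X_{j,j+1}X_{i,i+1}^2=0$; and $[E_{m-1,m+2},E_{m,m+1}]=[F_{m-1,m+2},F_{m,m+1}]=0$. Here for homogeneous $x,y$, $[x,y]=xy-(-1)^{\bar x\bar y}yx$ (super commutator, $\bar x$ the parity). For $i<j$ with $j>i+1$, elements $E_{ij},F_{ij}$ are defined recursively by $E_{ij}=E_{ic}E_{cj}-q_c^{-1}E_{cj}E_{ic}$ and $F_{ij}=-q_cF_{ic}F_{cj}+F_{cj}F_{ic}$ for $i<c<j$ (independent of the choice of $c$); $E_{ij},F_{ij}$ are odd if $(i,j)\in\mathcal I_1$ and even otherwise. *)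

(* Defs.v *)
From HB Require Import structures.
From mathcomp Require Import all_boot all_order all_algebra fraction.
Set Implicit Arguments. Unset Strict Implicit. Unset Printing Implicit Defensive.
Import Order.TTheory GRing.Theory Num.Theory.
Local Open Scope ring_scope.

(* The base field C(q): C a (model of the) complex numbers, q = 'X. *)
Definition Cq (C : numClosedFieldType) : fieldType := {fraction {poly C}}.
Definition qind (C : numClosedFieldType) : Cq C := @FracField.tofrac {poly C} 'X.

Section Uq.
Variables (F : fieldType) (q : F) (m n : nat).

Definition qi (i : nat) : F := if (i <= m)%N then q else q^-1.

(* parity of (i,j), i<j : odd iff (i,j) in I_1 *)
Definition par (i j : nat) : bool := ((i <= m) && (m < j))%N.

Variable A : algType F.

(* super commutator for homogeneous elements of parities a, b *)
Definition scomm (a b : bool) (x y : A) : A := x * y - (-1) ^+ (a && b) * (y * x).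

(* e i = E_{i,i+1}, f i = F_{i,i+1} *)
Variables (e f : nat -> A).

(* Ed i d = E_{i,i+d+1}, defined with c = i+1 in the recursion *)
Fixpoint Ed (i d : nat) : A :=
  match d with
  | 0 => e i
  | d'.+1 => e i * Ed i.+1 d' - (qi i.+1)^-1 *: (Ed i.+1 d' * e i)
  end.
Fixpoint Fd (i d : nat) : A :=
  match d with
  | 0 => f i
  | d'.+1 => - (qi i.+1 *: (f i * Fd i.+1 d')) + Fd i.+1 d' * f i
  end.
Definition Eij (i j : nat) : A := Ed i (j - i - 1).
Definition Fij (i j : nat) : A := Fd i (j - i - 1).

Definition dexp (i j : nat) : int := (i == j)%:Z - (i == j.+1)%:Z.

Variables (K Kinv : nat -> A).

Definition Uq_relations : Prop :=
     (forall i j, (1 <= i <= m + n)%N -> (1 <= j <= m + n)%N -> K i * K j = K j * K i) /\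
      (forall i, (1 <= i <= m + n)%N -> K i * Kinv i = 1 /\ Kinv i * K i = 1) /\
      (forall i j, (1 <= i <= m + n)%N -> (1 <= j < m + n)%N ->
         K i * e j * Kinv i = (qi i ^ dexp i j) *: e j /\
         K i * f j * Kinv i = (qi i ^ (- dexp i j)) *: f j) /\
      (forall i j, (1 <= i < m + n)%N -> (1 <= j < m + n)%N ->
         scomm (i == m) (j == m) (e i) (f j) =
         if i == j then (qi i - (qi i)^-1)^-1 *: (K i * Kinv i.+1 - Kinv i * K i.+1)
         else 0) /\
      e m * e m = 0 /\ f m * f m = 0 /\
      (forall i j, (1 <= i < m + n)%N -> (1 <= j < m + n)%N ->
         (i.+1 < j)%N || (j.+1 < i)%N ->
         e i * e j = e j * e i /\ f i * f j = f j * f i) /\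
      (forall i j, (1 <= i < m + n)%N -> (1 <= j < m + n)%N ->
         (j == i.+1) || (i == j.+1) -> i != m ->
         e i * e i * e j - (q + q^-1) *: (e i * e j * e i) + e j * e i * e i = 0 /\
         f i * f i * f j - (q + q^-1) *: (f i * f j * f i) + f j * f i * f i = 0) /\
      ((2 <= m)%N -> (2 <= n)%N ->
         scomm true true (Eij m.-1 m.+2) (e m) = 0 /\
         scomm true true (Fij m.-1 m.+2) (f m) = 0).

End Uq.

(* Main.v *)
Require Import Defs.
From HB Require Import structures.
From mathcomp Require Import all_boot all_order all_algebra fraction.
From mathcomp Require Import ring zify.
Import Order.TTheory GRing.Theory Num.Theory.
Local Open Scope ring_scope.

Section Lin.
Variables (F : fieldType) (V : lmodType F).
Inductive lx := LAt of nat | LZ | LAdd of lx & lx | LOpp of lx | LSc of F & lx.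
Fixpoint den (env : seq V) (x : lx) : V :=
  match x with
  | LAt k => nth 0 env k | LZ => 0 | LAdd a b => den env a + den env b
  | LOpp a => - den env a | LSc c a => c *: den env a end.
Fixpoint coef (x : lx) (i : nat) : F :=
  match x with
  | LAt k => if Nat.eqb k i then 1 else 0 | LZ => 0 | LAdd a b => coef a i + coef b i
  | LOpp a => - coef a i | LSc c a => c * coef a i end.
Fixpoint coefl (x : lx) (i : nat) : seq F :=
  match x with
  | LAt k => if Nat.eqb k i then [:: 1] else [::] | LZ => [::]
  | LAdd a b => coefl a i ++ coefl b i
  | LOpp a => map (fun t => - t) (coefl a i)
  | LSc c a => map (fun t => c * t) (coefl a i) end.
Definition sumf (s : seq F) := foldr (fun a b => a + b) 0 s.
Lemma coeflE x i : coef x i = sumf (coefl x i).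
Proof.
rewrite /sumf; elim: x => [k||a IHa b IHb|a IHa|c a IHa] /=.
- by case: (Nat.eqb k i) => /=; rewrite ?addr0.
- by [].
- by rewrite IHa IHb foldr_cat; elim: (coefl a i) => [|u s IH] /=; rewrite ?add0r // -IH addrA.
- by rewrite IHa; elim: (coefl a i) => [|u s IH] /=; rewrite ?oppr0 // opprD IH.
- by rewrite IHa; elim: (coefl a i) => [|u s IH] /=; rewrite ?mulr0 // mulrDr IH.
Qed.
Fixpoint allP (k : nat) (P : nat -> Prop) : Prop :=
  match k with 0 => True | S k => allP k P /\ P k end.
Lemma allPE k P : allP k P -> forall i, (i < k)%N -> P i.
Proof.
elim: k => [//|k IH] /= [H1 H2] i; rewrite ltnS leq_eqVlt => /orP [/eqP->//|]; exact: IH.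
Qed.
Lemma den_coef env x : den env x = \sum_(i < size env) coef x i *: nth 0 env i.
Proof.
elim: x => [k||a IHa b IHb|a IHa|c a IHa] /=.
- case: (ltnP k (size env)) => hk.
  + rewrite (bigD1 (Ordinal hk)) //= PeanoNat.Nat.eqb_refl scale1r big1 ?addr0 //.
    move=> [i hi] /= /eqP hne; case: PeanoNat.Nat.eqb_spec => [h|_]; last by rewrite scale0r.
    by exfalso; apply: hne; apply: val_inj => /=.
  + rewrite nth_default // big1 // => [[i hi]] _ /=.
    case: PeanoNat.Nat.eqb_spec => [h|_]; last by rewrite scale0r.
    by move: hi; rewrite -h ltnNge hk.
- by rewrite big1 // => i _; rewrite scale0r.
- by rewrite IHa IHb -big_split /=; apply: eq_bigr => i _; rewrite scalerDl.
- by rewrite IHa -sumrN; apply: eq_bigr => i _; rewrite scaleNr.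
- by rewrite IHa scaler_sumr; apply: eq_bigr => i _; rewrite scalerA.
Qed.
Lemma lin_eq env x y : allP (size env) (fun i => sumf (coefl x i) = sumf (coefl y i)) -> den env x = den env y.
Proof.
move/allPE=> h; rewrite !den_coef; apply: eq_bigr => i _; by rewrite !coeflE h.
Qed.
End Lin.
Arguments den {F V}.
Arguments lin_eq {F V}.

Ltac find_add x env :=
  lazymatch env with
  | nil => constr:((0%nat, cons x nil))
  | cons ?a ?r =>
    match goal with
    | _ => let _ := match goal with _ => unify a x end in constr:((0%nat, env))
    | _ => let p := find_add x r in
      lazymatch p with (?k, ?r') => constr:((S k, cons a r')) end
    end
  end.

Ltac reify F t env :=
  lazymatch t with
  | (?a + ?b)%R => let p1 := reify F a env in lazymatch p1 with (?e1, ?env1) =>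
       let p2 := reify F b env1 in lazymatch p2 with (?e2, ?env2) =>
       constr:((LAdd F e1 e2, env2)) end end
  | (- ?a)%R => let p1 := reify F a env in lazymatch p1 with (?e1, ?env1) =>
       constr:((LOpp F e1, env1)) end
  | (?c *: ?a)%R => let p1 := reify F a env in lazymatch p1 with (?e1, ?env1) =>
       constr:((LSc F c e1, env1)) end
  | 0%R => constr:((LZ F, env))
  | _ => let p := find_add t env in lazymatch p with (?k, ?env1) =>
       constr:((LAt F k, env1)) end
  end.

Ltac lin F :=
  lazymatch goal with |- @eq ?T ?l ?r =>
    let p1 := reify F l (@nil T) in lazymatch p1 with (?e1, ?env1) =>
    let p2 := reify F r env1 in lazymatch p2 with (?e2, ?env2) =>
    change (den env2 e1 = den env2 e2); apply: lin_eq; cbn [allP size coefl Nat.eqb map cat sumf foldr]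
    end end end.

Section Test.
Variables (F : fieldType) (A : algType F) (a b : A) (c : F).
Lemma t1 : c *: (a * b) + a - (c *: a) = a + c *: (a*b - a).
Proof. lin F. repeat split; ring. Qed.
End Test.

Ltac nrm := repeat progress (rewrite ?(mulrDl, mulrDr, mulrBl, mulrBr, mulNr, mulrN,
   scalerDr, scalerBr, scalerN, scalerA, mulrA) -?scalerAl -?scalerAr).

Lemma pre (F : fieldType) (A : algType F) (a b c : A) : a * b = c -> forall w, w * a * b = w * c.
Proof. by move=> h w; rewrite -mulrA h. Qed.
Arguments pre {F A a b c}.

Section G.
Variables (F : fieldType) (A : algType F).

Lemma stepL (e f x y Z P P' : A) (q d eps sig : F) :
 q != 0 -> d != 0 ->
 (eps = 1 \/ eps = -1) -> (sig = 1 \/ sig = -1) ->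
 e*y = y*e -> x*f = f*x ->
 e*f = eps *: (f*e) + d^-1 *: (P - P') ->
 x*y = sig *: (y*x) + Z ->
 P*x = q^-1 *: (x*P) -> P'*x = q *: (x*P') -> P*y = q *: (y*P) -> P'*y = q^-1 *: (y*P') ->
 Z*e = q^-1 *: (e*Z) -> Z*f = q *: (f*Z) -> P*Z = Z*P -> P'*Z = Z*P' ->
 (e*x - q^-1 *: (x*e)) * (-(q *: (f*y)) + y*f) - (eps*sig) *: ((-(q *: (f*y)) + y*f) * (e*x - q^-1 *: (x*e)))
 = ((q - q^-1)/d) *: (Z*P).
Proof.
move=> q0 d0 heps hsig h1 h2 h3 h4 h5 h6 h7 h8 h9 h10 h11 h12.
have h1' := pre h1; have h2' := pre h2; have h3' := pre h3; have h4' := pre h4.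
have h5' := pre h5; have h6' := pre h6; have h7' := pre h7; have h8' := pre h8.
have h9' := pre h9; have h10' := pre h10; have h11' := pre h11; have h12' := pre h12.
nrm.
repeat progress (rewrite ?(h1,h1',h2,h2',h3,h3',h4,h4',h5,h5',h6,h6',h7,h7',h8,h8',h9,h9',h10,h10',h11,h11',h12,h12'); nrm).
case: heps hsig => -> [] ->.
all: ((lin F); rewrite /=; repeat split; try (field; by rewrite ?d0 ?q0)).
Qed.

Lemma stepL2 (e f x y Z P P' : A) (q d eps sig : F) :
 q != 0 -> d != 0 ->
 (eps = 1 \/ eps = -1) -> (sig = 1 \/ sig = -1) ->
 e*y = y*e -> x*f = f*x ->
 e*f = eps *: (f*e) + d^-1 *: (P - P') ->
 x*y = sig *: (y*x) + Z ->
 P*x = q^-1 *: (x*P) -> P'*x = q *: (x*P') -> P*y = q *: (y*P) -> P'*y = q^-1 *: (y*P') ->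
 Z*e = q *: (e*Z) -> Z*f = q^-1 *: (f*Z) -> P*Z = Z*P -> P'*Z = Z*P' ->
 (e*x - q^-1 *: (x*e)) * (-(q *: (f*y)) + y*f) - (eps*sig) *: ((-(q *: (f*y)) + y*f) * (e*x - q^-1 *: (x*e)))
 = ((q - q^-1)/d) *: (Z*P').
Proof.
move=> q0 d0 heps hsig h1 h2 h3 h4 h5 h6 h7 h8 h9 h10 h11 h12.
have h1' := pre h1; have h2' := pre h2; have h3' := pre h3; have h4' := pre h4.
have h5' := pre h5; have h6' := pre h6; have h7' := pre h7; have h8' := pre h8.
have h9' := pre h9; have h10' := pre h10; have h11' := pre h11; have h12' := pre h12.
nrm.
repeat progress (rewrite ?(h1,h1',h2,h2',h3,h3',h4,h4',h5,h5',h6,h6',h7,h7',h8,h8',h9,h9',h10,h10',h11,h11',h12,h12'); nrm).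
case: heps hsig => -> [] ->.
all: ((lin F); rewrite /=; repeat split; try (field; by rewrite ?d0 ?q0)).
Qed.

Lemma base1 (e f y P P' : A) (q d eps : F) :
 q != 0 -> d != 0 -> (eps = 1 \/ eps = -1) ->
 e*y = y*e -> e*f = eps *: (f*e) + d^-1 *: (P - P') ->
 P*y = q *: (y*P) -> P'*y = q^-1 *: (y*P') ->
 e * (-(q *: (f*y)) + y*f) - eps *: ((-(q *: (f*y)) + y*f) * e) = ((q^-1 - q)/d) *: (P*y).
Proof.
move=> q0 d0 heps h1 h3 h7 h8.
have h1' := pre h1; have h3' := pre h3; have h7' := pre h7; have h8' := pre h8.
nrm.
repeat progress (rewrite ?(h1,h1',h3,h3',h7,h7',h8,h8'); nrm).
case: heps => ->.
all: ((lin F); rewrite /=; repeat split; try (field; by rewrite ?d0 ?q0)).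
Qed.

Lemma base2 (e f x P P' : A) (q d eps : F) :
 q != 0 -> d != 0 -> (eps = 1 \/ eps = -1) ->
 x*f = f*x -> e*f = eps *: (f*e) + d^-1 *: (P - P') ->
 P*x = q^-1 *: (x*P) -> P'*x = q *: (x*P') ->
 (e*x - q^-1 *: (x*e)) * f - eps *: (f * (e*x - q^-1 *: (x*e))) = ((q^-1 - q)/d) *: (x*P').
Proof.
move=> q0 d0 heps h2 h3 h5 h6.
have h2' := pre h2; have h3' := pre h3; have h5' := pre h5; have h6' := pre h6.
nrm.
repeat progress (rewrite ?(h2,h2',h3,h3',h5,h5',h6,h6'); nrm).
case: heps => ->.
all: ((lin F); rewrite /=; repeat split; try (field; by rewrite ?d0 ?q0)).
Qed.

Lemma mainE (e x Fv Y : A) (a sg : F) :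
 e*Fv = Fv*e -> x*Fv - sg*:(Fv*x) = Y ->
 (e*x - a*:(x*e))*Fv - sg*:(Fv*(e*x - a*:(x*e))) = e*Y - a*:(Y*e).
Proof.
move=> h1 <-; have h1' := pre h1.
nrm. rewrite ?(h1, h1'); nrm. lin F; rewrite /=; repeat split; try ring.
Qed.

Lemma mainF (f y Ev Y : A) (b sg : F) :
 f*Ev = Ev*f -> Ev*y - sg*:(y*Ev) = Y ->
 Ev*(-(b*:(f*y)) + y*f) - sg*:((-(b*:(f*y)) + y*f)*Ev) = -(b*:(f*Y)) + Y*f.
Proof.
move=> h1 <-; have h1' := pre (esym h1).
nrm. rewrite -?h1 ?h1'. nrm. lin F; rewrite /=; repeat split; try ring.
Qed.
End G.


Section H.
Variables (F : fieldType) (A : algType F).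
Lemma fld1 (x d y : F) : x != 0 -> d != 0 -> x / d * (y / x) = y / d.
Proof. move=> hx hd; field; by rewrite hx hd. Qed.
Lemma fin1 (e Zb : A) (al q c : F) : q != 0 -> Zb * e = q^-1 *: (e * Zb) -> al * (q - q^-1) = c ->
  e * (al *: Zb) - q^-1 *: ((al *: Zb) * e) = c *: (Zb * e).
Proof.
move=> q0 h <-; nrm; rewrite ?h; nrm.
lin F; rewrite /=; repeat split; try (field; by rewrite q0).
Qed.
Lemma fin2 (e Zb E' : A) (c a : F) : e * Zb = Zb * e ->
  e * (c *: (Zb * E')) - a *: (c *: (Zb * E') * e) = c *: (Zb * (e * E' - a *: (E' * e))).
Proof.
move=> h; have h' := pre h; nrm; rewrite ?h ?h'; nrm.
lin F; rewrite /=; repeat split; try ring.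
Qed.
Lemma fin3 (f Zb : A) (be b c : F) : b != 0 -> Zb * f = b^-1 *: (f * Zb) -> be * (b^-1 - b) = c ->
  -(b *: (f * (be *: Zb))) + (be *: Zb) * f = c *: (f * Zb).
Proof.
move=> b0 h <-; nrm; rewrite ?h; nrm.
lin F; rewrite /=; repeat split; try (field; by rewrite b0).
Qed.
Lemma fin4 (f F' R : A) (b c : F) : R * f = f * R ->
  -(b *: (f * (c *: (F' * R)))) + (c *: (F' * R)) * f = c *: ((-(b *: (f * F')) + F' * f) * R).
Proof.
move=> h; have h' := pre h; nrm; rewrite ?h ?h'; nrm.
lin F; rewrite /=; repeat split; try ring.
Qed.
End H.

Section M.
Variables (C : numClosedFieldType) (m n : nat) (A : algType (Cq C)) (K Kinv e f : nat -> A).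
Hypothesis hrel : Uq_relations (qind C) m n e f K Kinv.
Local Notation q0 := (qind C).
Local Notation Q := (qi q0 m).
Local Notation E := (Eij q0 m e).
Local Notation Fi := (Fij q0 m f).
Local Notation FF := (Cq C).

Lemma q0_neq0 : q0 != 0.
Proof. by rewrite /qind -(@tofrac0 {poly C}) tofrac_eq polyX_eq0. Qed.

Lemma q0sq : q0 * q0 != 1.
Proof.
rewrite /qind -(@tofracM {poly C}) -(@tofrac1 {poly C}) tofrac_eq.
apply/eqP => h; have := congr1 (fun p : {poly C} => size p) h.
by rewrite /= -expr2 size_polyXn size_poly1.
Qed.

Lemma Q_neq0 j : Q j != 0.
Proof. by rewrite /qi; case: ifP => _; rewrite ?invr_eq0 q0_neq0. Qed.

Lemma D_neq0 j : Q j - (Q j)^-1 != 0.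
Proof.
apply/negP; rewrite subr_eq0 => /eqP h.
have: Q j * Q j = 1 by rewrite {2}h mulfV ?Q_neq0.
rewrite /qi; case: ifP => _ => [|]; first by move/eqP; rewrite (negbTE q0sq).
by rewrite -invfM => /(congr1 (fun x => x^-1)); rewrite invrK invr1 => /eqP; rewrite (negbTE q0sq).
Qed.

Lemma scommE a b (x y : A) : scomm a b x y = x * y - ((-1) ^+ (a && b) : FF) *: (y * x).
Proof. by rewrite /scomm; case: (a && b); rewrite ?expr1 ?expr0 ?scaleN1r ?mulN1r ?scale1r ?mul1r. Qed.

Lemma sign_cases (b : bool) : ((-1) ^+ b : FF) = 1 \/ ((-1) ^+ b : FF) = -1.
Proof. by case: b; [right; rewrite expr1 | left; rewrite expr0]. Qed.

Definition rng i := (1 <= i <= m + n)%N.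
Definition rng1 i := (1 <= i < m + n)%N.

Lemma KK i j : rng i -> rng j -> K i * K j = K j * K i.
Proof. by case: hrel => h _; apply: h. Qed.
Lemma KKi i : rng i -> K i * Kinv i = 1 /\ Kinv i * K i = 1.
Proof. by case: hrel => _ [h _]; apply: h. Qed.

Lemma KiK i j : rng i -> rng j -> Kinv i * K j = K j * Kinv i.
Proof.
move=> hi hj; have [h1 h2] := KKi i hi.
rewrite -[Kinv i * K j]mulr1 -h1 !mulrA -[Kinv i * K j * K i]mulrA -KK // !mulrA h2 mul1r //.
Qed.
Lemma KiKi i j : rng i -> rng j -> Kinv i * Kinv j = Kinv j * Kinv i.
Proof.
move=> hi hj; have [h1 h2] := KKi i hi.
rewrite -[Kinv i * Kinv j]mulr1 -h1 !mulrA -[Kinv i * Kinv j * K i]mulrA KiK // !mulrA h2 mul1r //.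
Qed.

Lemma rel_ef i : rng1 i ->
  e i * f i = ((-1) ^+ (i == m) : FF) *: (f i * e i)
     + (Q i - (Q i)^-1)^-1 *: (K i * Kinv i.+1 - Kinv i * K i.+1).
Proof.
move=> hi; case: hrel => _ [_ [_ [h _]]]; have := h i i hi hi.
rewrite eqxx scommE andbb => <-; by rewrite addrC subrK.
Qed.

Lemma ef_comm i j : rng1 i -> rng1 j -> i != j -> e i * f j = f j * e i.
Proof.
move=> hi hj hij; case: hrel => _ [_ [_ [h _]]]; have := h i j hi hj.
rewrite (negbTE hij) scommE.
have -> : ((i == m) && (j == m)) = false.
  by apply/negbTE; apply: contra hij => /andP [/eqP -> /eqP ->].
by rewrite expr0 scale1r => /eqP; rewrite subr_eq0 => /eqP.
Qed.

Lemma ee_far i j : rng1 i -> rng1 j -> (i.+1 < j)%N || (j.+1 < i)%N -> e i * e j = e j * e i.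
Proof. by move=> hi hj hij; case: hrel => _ [_ [_ [_ [_ [_ [h _]]]]]]; case: (h i j hi hj hij). Qed.
Lemma ff_far i j : rng1 i -> rng1 j -> (i.+1 < j)%N || (j.+1 < i)%N -> f i * f j = f j * f i.
Proof. by move=> hi hj hij; case: hrel => _ [_ [_ [_ [_ [_ [h _]]]]]]; case: (h i j hi hj hij). Qed.

Lemma Kpow i j : (Q i ^ dexp i j) = if i == j then Q i else if i == j.+1 then (Q i)^-1 else 1.
Proof.
rewrite /dexp; case: (eqVneq i j) => [->|hne] /=.
  by rewrite (_ : (j == j.+1) = false) ?subr0 ?expr1z //; lia.
case: (eqVneq i j.+1) => [_|_] /=; first by rewrite sub0r exprN1.
by rewrite subr0 expr0z.
Qed.

Definition cj k (X : A) (c : FF) := K k * X = c *: (X * K k) /\ Kinv k * X = c^-1 *: (X * Kinv k).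

Lemma cj_mul k X Y c1 c2 : cj k X c1 -> cj k Y c2 -> cj k (X * Y) (c1 * c2).
Proof.
move=> [h1 h1'] [h2 h2']; split.
  by rewrite mulrA h1 -scalerAl -[X * K k * Y]mulrA h2 -scalerAr scalerA mulrA.
by rewrite mulrA h1' -scalerAl -[X * Kinv k * Y]mulrA h2' -scalerAr scalerA mulrA invfM mulrC.
Qed.
Lemma cj_add k X Y c : cj k X c -> cj k Y c -> cj k (X + Y) c.
Proof. by move=> [h1 h1'] [h2 h2']; split; rewrite mulrDr mulrDl scalerDr ?h1 ?h2 ?h1' ?h2'. Qed.
Lemma cj_scale k X c a : cj k X c -> cj k (a *: X) c.
Proof. by move=> [h1 h1']; split; rewrite -scalerAr -scalerAl ?h1 ?h1' !scalerA mulrC. Qed.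
Lemma cj_opp k X c : cj k X c -> cj k (- X) c.
Proof. by move=> [h1 h1']; split; rewrite mulrN mulNr ?h1 ?h1' scalerN. Qed.
Lemma cj_sub k X Y c : cj k X c -> cj k Y c -> cj k (X - Y) c.
Proof. by move=> h1 h2; apply: cj_add => //; apply: cj_opp. Qed.

Lemma cj_e k l : rng k -> rng1 l ->
  cj k (e l) (if k == l then Q k else if k == l.+1 then (Q k)^-1 else 1).
Proof.
move=> hk hl; case: hrel => _ [_ [h _]]; have [h1 h2] := h k l hk hl.
have [hK1 hK2] := KKi k hk.
rewrite -Kpow; have cn0 : Q k ^ dexp k l != 0 by rewrite expfz_eq0 negb_and Q_neq0 orbT.
split.
  by rewrite scalerAl -h1 -!mulrA hK2 mulr1.
have h3 : e l * Kinv k = Q k ^ dexp k l *: (Kinv k * e l).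
  by rewrite scalerAr -h1 !mulrA hK2 mul1r.
by rewrite h3 scalerA mulVf ?scale1r.
Qed.

Lemma cj_f k l : rng k -> rng1 l ->
  cj k (f l) (if k == l then (Q k)^-1 else if k == l.+1 then Q k else 1).
Proof.
move=> hk hl; case: hrel => _ [_ [h _]]; have [h1 h2] := h k l hk hl.
have [hK1 hK2] := KKi k hk.
have -> : (if k == l then (Q k)^-1 else if k == l.+1 then Q k else 1) = Q k ^ (- dexp k l).
  by rewrite -invr_expz Kpow; repeat (case: ifP => _); rewrite ?invrK ?invr1.
have cn0 : Q k ^ (- dexp k l) != 0 by rewrite expfz_eq0 negb_and Q_neq0 orbT.
split.
  by rewrite scalerAl -h2 -!mulrA hK2 mulr1.
have h3 : f l * Kinv k = Q k ^ (- dexp k l) *: (Kinv k * f l).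
  by rewrite scalerAr -h2 !mulrA hK2 mul1r.
by rewrite h3 scalerA mulVf ?scale1r.
Qed.

Lemma cj_K k l : rng k -> rng l -> cj k (K l) 1.
Proof. move=> hk hl; split; rewrite ?invr1 scale1r; [exact: KK | exact: KiK]. Qed.
Lemma cj_Ki k l : rng k -> rng l -> cj k (Kinv l) 1.
Proof.
move=> hk hl; split; rewrite ?invr1 scale1r; last exact: KiKi.
have [h1 h2] := KKi l hl.
rewrite -[K k * Kinv l]mul1r -h2 -!mulrA; congr (_ * _).
by rewrite !mulrA -KK // -!mulrA h1 mulr1.
Qed.

Lemma Erec i j : (i.+1 < j)%N -> E i j = e i * E i.+1 j - (Q i.+1)^-1 *: (E i.+1 j * e i).
Proof. move=> h; rewrite /Eij; have -> : (j - i - 1 = (j - i.+1 - 1).+1)%N by lia. by []. Qed.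
Lemma Frec i j : (i.+1 < j)%N -> Fi i j = - (Q i.+1 *: (f i * Fi i.+1 j)) + Fi i.+1 j * f i.
Proof. move=> h; rewrite /Fij; have -> : (j - i - 1 = (j - i.+1 - 1).+1)%N by lia. by []. Qed.
Lemma Ebase i : E i i.+1 = e i.
Proof. rewrite /Eij; have -> : (i.+1 - i - 1 = 0)%N by lia. by []. Qed.
Lemma Fbase i : Fi i i.+1 = f i.
Proof. rewrite /Fij; have -> : (i.+1 - i - 1 = 0)%N by lia. by []. Qed.

Ltac ifs := repeat (case: eqP => ?); try (exfalso; lia);
  rewrite ?mulr1 ?mul1r ?mulVf ?mulfV ?Q_neq0 //.

Lemma cj_Ed k a d : rng k -> (1 <= a)%N -> (a + d.+1 <= m + n)%N ->
  cj k (Ed q0 m e a d) (if k == a then Q k else if k == (a + d).+1 then (Q k)^-1 else 1).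
Proof.
move=> hk; elim: d a => [|d IH] a ha hd /=.
  by rewrite addn0; apply: cj_e => //; rewrite /rng1; lia.
have he := cj_e k a hk ltac:(rewrite /rng1; lia).
have hI := IH a.+1 ltac:(lia) ltac:(lia).
have -> : (if k == a then Q k else if k == (a + d.+1).+1 then (Q k)^-1 else 1) =
  (if k == a then Q k else if k == a.+1 then (Q k)^-1 else 1) *
  (if k == a.+1 then Q k else if k == (a.+1 + d).+1 then (Q k)^-1 else 1) by ifs.
apply: cj_sub; first exact: cj_mul.
by rewrite mulrC; apply: cj_scale; apply: cj_mul.
Qed.

Lemma cj_Fd k a d : rng k -> (1 <= a)%N -> (a + d.+1 <= m + n)%N ->
  cj k (Fd q0 m f a d) (if k == a then (Q k)^-1 else if k == (a + d).+1 then Q k else 1).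
Proof.
move=> hk; elim: d a => [|d IH] a ha hd /=.
  by rewrite addn0; apply: cj_f => //; rewrite /rng1; lia.
have he := cj_f k a hk ltac:(rewrite /rng1; lia).
have hI := IH a.+1 ltac:(lia) ltac:(lia).
have -> : (if k == a then (Q k)^-1 else if k == (a + d.+1).+1 then Q k else 1) =
  (if k == a then (Q k)^-1 else if k == a.+1 then Q k else 1) *
  (if k == a.+1 then (Q k)^-1 else if k == (a.+1 + d).+1 then Q k else 1) by ifs.
apply: cj_add; first by apply: cj_opp; apply: cj_scale; apply: cj_mul.
by rewrite mulrC; apply: cj_mul.
Qed.

Lemma cj_E k a b : rng k -> (1 <= a)%N -> (a < b)%N -> (b <= m + n)%N ->
  cj k (E a b) (if k == a then Q k else if k == b then (Q k)^-1 else 1).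
Proof.
move=> hk ha hab hb; rewrite /Eij.
have {2}-> : b = (a + (b - a - 1)).+1%N by lia.
apply: cj_Ed => //; lia.
Qed.
Lemma cj_F k a b : rng k -> (1 <= a)%N -> (a < b)%N -> (b <= m + n)%N ->
  cj k (Fi a b) (if k == a then (Q k)^-1 else if k == b then Q k else 1).
Proof.
move=> hk ha hab hb; rewrite /Fij.
have {2}-> : b = (a + (b - a - 1)).+1%N by lia.
apply: cj_Fd => //; lia.
Qed.

Definition cm (z X : A) := z * X = X * z.
Lemma cm_mul z X Y : cm z X -> cm z Y -> cm z (X * Y).
Proof. by rewrite /cm => h1 h2; rewrite mulrA h1 -mulrA h2 mulrA. Qed.
Lemma cm_add z X Y : cm z X -> cm z Y -> cm z (X + Y).
Proof. by rewrite /cm => h1 h2; rewrite mulrDr mulrDl h1 h2. Qed.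
Lemma cm_opp z X : cm z X -> cm z (- X).
Proof. by rewrite /cm => h1; rewrite mulrN mulNr h1. Qed.
Lemma cm_scale z X a : cm z X -> cm z (a *: X).
Proof. by rewrite /cm => h1; rewrite -scalerAr -scalerAl h1. Qed.
Lemma cm_sub z X Y : cm z X -> cm z Y -> cm z (X - Y).
Proof. by move=> h1 h2; apply: cm_add => //; apply: cm_opp. Qed.

Lemma e_Fd k a d : rng1 k -> (1 <= a)%N -> (a + d.+1 <= m + n)%N -> (k < a)%N || (a + d < k)%N ->
  cm (e k) (Fd q0 m f a d).
Proof.
move=> hk; elim: d a => [|d IH] a ha hd hka /=.
  by apply: ef_comm => //; rewrite /rng1 //; lia.
have hf : cm (e k) (f a) by apply: ef_comm => //; rewrite /rng1; lia.
have hI := IH a.+1 ltac:(lia) ltac:(lia) ltac:(lia).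
apply: cm_add; first by apply: cm_opp; apply: cm_scale; apply: cm_mul.
exact: cm_mul.
Qed.

Lemma f_Ed k a d : rng1 k -> (1 <= a)%N -> (a + d.+1 <= m + n)%N -> (k < a)%N || (a + d < k)%N ->
  cm (f k) (Ed q0 m e a d).
Proof.
move=> hk; elim: d a => [|d IH] a ha hd hka /=.
  by rewrite /cm; symmetry; apply: ef_comm => //; rewrite /rng1 //; lia.
have hf : cm (f k) (e a) by rewrite /cm; symmetry; apply: ef_comm => //; rewrite /rng1; lia.
have hI := IH a.+1 ltac:(lia) ltac:(lia) ltac:(lia).
apply: cm_sub; first exact: cm_mul.
by apply: cm_scale; apply: cm_mul.
Qed.

Lemma e_Ed k a d : rng1 k -> (1 <= a)%N -> (a + d.+1 <= m + n)%N -> (k.+1 < a)%N || (a + d.+1 < k)%N ->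
  cm (e k) (Ed q0 m e a d).
Proof.
move=> hk; elim: d a => [|d IH] a ha hd hka /=.
  by apply: ee_far => //; rewrite /rng1 //; lia.
have hf : cm (e k) (e a) by apply: ee_far => //; rewrite /rng1; lia.
have hI := IH a.+1 ltac:(lia) ltac:(lia) ltac:(lia).
apply: cm_sub; first exact: cm_mul.
by apply: cm_scale; apply: cm_mul.
Qed.

Lemma f_Fd k a d : rng1 k -> (1 <= a)%N -> (a + d.+1 <= m + n)%N -> (k.+1 < a)%N || (a + d.+1 < k)%N ->
  cm (f k) (Fd q0 m f a d).
Proof.
move=> hk; elim: d a => [|d IH] a ha hd hka /=.
  by apply: ff_far => //; rewrite /rng1 //; lia.
have hf : cm (f k) (f a) by apply: ff_far => //; rewrite /rng1; lia.
have hI := IH a.+1 ltac:(lia) ltac:(lia) ltac:(lia).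
apply: cm_add; first by apply: cm_opp; apply: cm_scale; apply: cm_mul.
exact: cm_mul.
Qed.

Lemma e_F k a b : rng1 k -> (1 <= a)%N -> (a < b)%N -> (b <= m + n)%N -> (k < a)%N || (b <= k)%N ->
  cm (e k) (Fi a b).
Proof. move=> *; rewrite /Fij; apply: e_Fd => //; lia. Qed.
Lemma f_E k a b : rng1 k -> (1 <= a)%N -> (a < b)%N -> (b <= m + n)%N -> (k < a)%N || (b <= k)%N ->
  cm (f k) (E a b).
Proof. move=> *; rewrite /Eij; apply: f_Ed => //; lia. Qed.
Lemma e_E k a b : rng1 k -> (1 <= a)%N -> (a < b)%N -> (b <= m + n)%N -> (k.+1 < a)%N || (b < k)%N ->
  cm (e k) (E a b).
Proof. move=> *; rewrite /Eij; apply: e_Ed => //; lia. Qed.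
Lemma f_F k a b : rng1 k -> (1 <= a)%N -> (a < b)%N -> (b <= m + n)%N -> (k.+1 < a)%N || (b < k)%N ->
  cm (f k) (Fi a b).
Proof. move=> *; rewrite /Fij; apply: f_Fd => //; lia. Qed.

Lemma cj_eq k X c c' : cj k X c -> c = c' -> cj k X c'.
Proof. by move=> h <-. Qed.

Lemma cjP k1 k2 X c1 c2 : cj k1 X c1 -> cj k2 X c2 ->
  (K k1 * Kinv k2) * X = (c1 / c2) *: (X * (K k1 * Kinv k2)).
Proof.
move=> [h1 _] [_ h2]; rewrite -mulrA h2 -scalerAr [K k1 * (X * _)]mulrA h1 -scalerAl scalerA.
by rewrite -[X * K k1 * _]mulrA mulrC.
Qed.
Arguments cjP {k1 k2 X c1 c2}.
Lemma cjP' k1 k2 X c1 c2 : cj k1 X c1 -> cj k2 X c2 ->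
  (Kinv k1 * K k2) * X = (c2 / c1) *: (X * (Kinv k1 * K k2)).
Proof.
move=> [_ h1] [h2 _]; rewrite -mulrA h2 -scalerAr [Kinv k1 * (X * _)]mulrA h1 -scalerAl scalerA.
by rewrite -[X * Kinv k1 * _]mulrA mulrC.
Qed.
Arguments cjP' {k1 k2 X c1 c2}.
Lemma cjPW k1 k2 X W a c1 c2 : cj k1 X c1 -> cj k2 X c2 -> X * W = W * X ->
  (a *: (K k1 * Kinv k2 * W)) * X = (c1 / c2) *: (X * (a *: (K k1 * Kinv k2 * W))).
Proof.
move=> h1 h2 h3; rewrite -scalerAl -[_ * W * X]mulrA -h3 [_ * (X * W)]mulrA (cjP h1 h2) -scalerAl -scalerAr scalerA.
by rewrite scalerA [a * _]mulrC !mulrA.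
Qed.
Lemma cjWP' k1 k2 X W a c1 c2 : cj k1 X c1 -> cj k2 X c2 -> X * W = W * X ->
  (a *: (W * Kinv k1 * K k2)) * X = (c2 / c1) *: (X * (a *: (W * Kinv k1 * K k2))).
Proof.
move=> h1 h2 h3; rewrite -scalerAl -[W * Kinv k1 * K k2]mulrA -[W * _ * X]mulrA (cjP' h1 h2).
rewrite -scalerAr [W * (X * _)]mulrA -h3.
by rewrite -scalerAr !scalerA [a * _]mulrC !mulrA.
Qed.

Lemma KalgA a b c : rng a -> rng b -> rng c ->
  K a * Kinv b * (K c * Kinv a) = K c * Kinv b.
Proof.
move=> ha hb hc; have [h1 h2] := KKi a ha.
rewrite -mulrA [Kinv b * _]mulrA KiK // -mulrA [K a * _]mulrA KK // -mulrA; congr (_ * _).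
by rewrite [Kinv b * _]KiKi // mulrA h1 mul1r.
Qed.
Lemma KalgB a b c : rng a -> rng b -> rng c ->
  Kinv a * K b * (Kinv c * K a) = Kinv c * K b.
Proof.
move=> ha hb hc; have [h1 h2] := KKi a ha.
have e1 : K b * Kinv c = Kinv c * K b by rewrite KiK.
rewrite -mulrA [K b * _]mulrA e1 -mulrA [Kinv a * _]mulrA KiKi // -mulrA; congr (_ * _).
by rewrite [K b * _]KK // mulrA h2 mul1r.
Qed.

Arguments cjPW {k1 k2 X W a c1 c2}.
Arguments cjWP' {k1 k2 X W a c1 c2}.

Ltac rg := rewrite /rng /rng1 /=; lia.
Ltac kscal := repeat (case: eqP => ?); try (exfalso; lia);
  rewrite ?div1r ?divr1 ?invrK ?invr1 ?mulr1 ?mul1r ?mulVf ?mulfV ?Q_neq0 //.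

Lemma sgn_step (b1 b2 b3 : bool) : b1 = b2 (+) b3 ->
  ((-1) ^+ b1 : FF) = (-1) ^+ b2 * (-1) ^+ b3.
Proof. by move=> ->; rewrite signr_addb. Qed.

Lemma L1 k : forall s j t, j = (s + k.+1)%N -> (1 <= s)%N -> (j < t)%N -> (t <= m + n)%N ->
  scomm (par m s j) (par m s t) (E s j) (Fi s t) =
  (((Q j)^-1 - Q j) / (Q s - (Q s)^-1)) *: (K s * Kinv j * Fi j t).
Proof.
elim: k => [|k IH] s j t hj hs hjt ht.
  rewrite addn1 in hj; subst j.
  rewrite Ebase Frec // scommE.
  have -> : (par m s s.+1 && par m s t) = (s == m) by rewrite /par; lia.
  apply: (@base1 _ _ (e s) (f s) (Fi s.+1 t) (K s * Kinv s.+1) (Kinv s * K s.+1)).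
  - exact: Q_neq0.
  - exact: D_neq0.
  - exact: sign_cases.
  - by apply: e_F => //; rg.
  - by apply: rel_ef; rg.
  - rewrite (cjP (cj_F s s.+1 t ltac:(rg) ltac:(lia) ltac:(lia) ht) (cj_F s.+1 s.+1 t ltac:(rg) ltac:(lia) ltac:(lia) ht)).
    by congr (_ *: _); kscal.
  - rewrite (cjP' (cj_F s s.+1 t ltac:(rg) ltac:(lia) ltac:(lia) ht) (cj_F s.+1 s.+1 t ltac:(rg) ltac:(lia) ltac:(lia) ht)).
    by congr (_ *: _); kscal.
have hsj : (s.+1 < j)%N by lia.
rewrite Erec // Frec; last by lia.
have IH' := IH s.+1 j t ltac:(lia) ltac:(lia) hjt ht.
rewrite scommE in IH'.
set a' := (_ / _) in IH'.
set Zb := K s.+1 * Kinv j * Fi j t in IH'.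
set Z := a' *: Zb in IH'.
rewrite scommE (@sgn_step _ (s == m) (par m s.+1 j && par m s.+1 t)); last by rewrite /par; lia.
have cjs_e : cj s.+1 (e s) (Q s.+1)^-1 by apply: cj_eq; [apply: cj_e; rg | kscal].
have cjj_e : cj j (e s) 1 by apply: cj_eq; [apply: cj_e; rg | kscal].
have cjs_f : cj s.+1 (f s) (Q s.+1) by apply: cj_eq; [apply: cj_f; rg | kscal].
have cjj_f : cj j (f s) 1 by apply: cj_eq; [apply: cj_f; rg | kscal].
have cjZ1 : cj s Zb 1.
  apply: cj_eq; first apply: cj_mul; first apply: cj_mul.
  - by apply: cj_K; rg.
  - by apply: cj_Ki; rg.
  - by apply: cj_F => //; rg.
  - by kscal.
have cjZ2 : cj s.+1 Zb 1.
  apply: cj_eq; first apply: cj_mul; first apply: cj_mul.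
  - by apply: cj_K; rg.
  - by apply: cj_Ki; rg.
  - by apply: cj_F => //; rg.
  - by kscal.
rewrite (@stepL _ _ (e s) (f s) (E s.+1 j) (Fi s.+1 t) Z (K s * Kinv s.+1) (Kinv s * K s.+1)
   (Q s.+1) (Q s - (Q s)^-1) _ _ (Q_neq0 _) (D_neq0 _) (sign_cases _) (sign_cases _)).
- rewrite /Z -scalerAl scalerA /Zb.
  have hsh : Fi j t * (K s * Kinv s.+1) = K s * Kinv s.+1 * Fi j t.
    rewrite (cjP (@cj_eq _ _ _ 1 (cj_F s j t ltac:(rg) ltac:(lia) ltac:(lia) ht) ltac:(kscal))
                 (@cj_eq _ _ _ 1 (cj_F s.+1 j t ltac:(rg) ltac:(lia) ltac:(lia) ht) ltac:(kscal))).
    by rewrite divr1 scale1r.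
  rewrite -[_ * Fi j t * _]mulrA hsh [_ * (_ * Fi j t)]mulrA KalgA; try rg.
  congr (_ *: _); rewrite /a'.
  by rewrite fld1 ?D_neq0.
- by apply: e_F => //; rg.
- by symmetry; apply: f_E => //; rg.
- by apply: rel_ef; rg.
- by rewrite -IH' addrC subrK.
- rewrite (cjP (cj_E s s.+1 j ltac:(rg) ltac:(lia) ltac:(lia) ltac:(lia)) (cj_E s.+1 s.+1 j ltac:(rg) ltac:(lia) ltac:(lia) ltac:(lia))).
  by congr (_ *: _); kscal.
- rewrite (cjP' (cj_E s s.+1 j ltac:(rg) ltac:(lia) ltac:(lia) ltac:(lia)) (cj_E s.+1 s.+1 j ltac:(rg) ltac:(lia) ltac:(lia) ltac:(lia))).
  by congr (_ *: _); kscal.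
- rewrite (cjP (cj_F s s.+1 t ltac:(rg) ltac:(lia) ltac:(lia) ht) (cj_F s.+1 s.+1 t ltac:(rg) ltac:(lia) ltac:(lia) ht)).
  by congr (_ *: _); kscal.
- rewrite (cjP' (cj_F s s.+1 t ltac:(rg) ltac:(lia) ltac:(lia) ht) (cj_F s.+1 s.+1 t ltac:(rg) ltac:(lia) ltac:(lia) ht)).
  by congr (_ *: _); kscal.
- rewrite /Z /Zb (cjPW cjs_e cjj_e); first by rewrite divr1.
  by apply: e_F => //; rg.
- rewrite /Z /Zb (cjPW cjs_f cjj_f); first by rewrite divr1.
  by apply: f_F => //; rg.
- by rewrite /Z -scalerAr -scalerAl (cjP cjZ1 cjZ2) divr1 scale1r.
- by rewrite /Z -scalerAr -scalerAl (cjP' cjZ1 cjZ2) divr1 scale1r.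
Qed.

Lemma L2 k : forall s j t, j = (s + k.+1)%N -> (1 <= s)%N -> (j < t)%N -> (t <= m + n)%N ->
  scomm (par m s t) (par m s j) (E s t) (Fi s j) =
  (((Q j)^-1 - Q j) / (Q s - (Q s)^-1)) *: (E j t * Kinv s * K j).
Proof.
elim: k => [|k IH] s j t hj hs hjt ht.
  rewrite addn1 in hj; subst j.
  rewrite Fbase Erec; last by lia.
  rewrite scommE.
  have -> : (par m s t && par m s s.+1) = (s == m) by rewrite /par; lia.
  rewrite -[E s.+1 t * Kinv s * K s.+1]mulrA.
  apply: (@base2 _ _ (e s) (f s) (E s.+1 t) (K s * Kinv s.+1) (Kinv s * K s.+1)).
  - exact: Q_neq0.
  - exact: D_neq0.
  - exact: sign_cases.
  - by symmetry; apply: f_E => //; rg.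
  - by apply: rel_ef; rg.
  - rewrite (cjP (cj_E s s.+1 t ltac:(rg) ltac:(lia) ltac:(lia) ht) (cj_E s.+1 s.+1 t ltac:(rg) ltac:(lia) ltac:(lia) ht)).
    by congr (_ *: _); kscal.
  - rewrite (cjP' (cj_E s s.+1 t ltac:(rg) ltac:(lia) ltac:(lia) ht) (cj_E s.+1 s.+1 t ltac:(rg) ltac:(lia) ltac:(lia) ht)).
    by congr (_ *: _); kscal.
have hsj : (s.+1 < j)%N by lia.
rewrite Erec; last by lia.
rewrite Frec //.
have IH' := IH s.+1 j t ltac:(lia) ltac:(lia) hjt ht.
rewrite scommE in IH'.
set a' := (_ / _) in IH'.
set Zb := E j t * Kinv s.+1 * K j in IH'.
set Z := a' *: Zb in IH'.
rewrite scommE (@sgn_step _ (s == m) (par m s.+1 t && par m s.+1 j)); last by rewrite /par; lia.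
have cjs_e : cj s.+1 (e s) (Q s.+1)^-1 by apply: cj_eq; [apply: cj_e; rg | kscal].
have cjj_e : cj j (e s) 1 by apply: cj_eq; [apply: cj_e; rg | kscal].
have cjs_f : cj s.+1 (f s) (Q s.+1) by apply: cj_eq; [apply: cj_f; rg | kscal].
have cjj_f : cj j (f s) 1 by apply: cj_eq; [apply: cj_f; rg | kscal].
have cjZ1 : cj s Zb 1.
  apply: cj_eq; first apply: cj_mul; first apply: cj_mul.
  - by apply: cj_E => //; rg.
  - by apply: cj_Ki; rg.
  - by apply: cj_K; rg.
  - by kscal.
have cjZ2 : cj s.+1 Zb 1.
  apply: cj_eq; first apply: cj_mul; first apply: cj_mul.
  - by apply: cj_E => //; rg.
  - by apply: cj_Ki; rg.
  - by apply: cj_K; rg.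
  - by kscal.
rewrite (@stepL2 _ _ (e s) (f s) (E s.+1 t) (Fi s.+1 j) Z (K s * Kinv s.+1) (Kinv s * K s.+1)
   (Q s.+1) (Q s - (Q s)^-1) _ _ (Q_neq0 _) (D_neq0 _) (sign_cases _) (sign_cases _)).
- rewrite /Z -scalerAl scalerA /Zb.
  rewrite -[E j t * Kinv s.+1 * K j]mulrA -[E j t * _ * (Kinv s * K s.+1)]mulrA KalgB; try rg.
  rewrite mulrA; congr (_ *: _); rewrite /a'.
  by rewrite fld1 ?D_neq0.
- by apply: e_F => //; rg.
- by symmetry; apply: f_E => //; rg.
- by apply: rel_ef; rg.
- by rewrite -IH' addrC subrK.
- rewrite (cjP (cj_E s s.+1 t ltac:(rg) ltac:(lia) ltac:(lia) ht) (cj_E s.+1 s.+1 t ltac:(rg) ltac:(lia) ltac:(lia) ht)).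
  by congr (_ *: _); kscal.
- rewrite (cjP' (cj_E s s.+1 t ltac:(rg) ltac:(lia) ltac:(lia) ht) (cj_E s.+1 s.+1 t ltac:(rg) ltac:(lia) ltac:(lia) ht)).
  by congr (_ *: _); kscal.
- rewrite (cjP (cj_F s s.+1 j ltac:(rg) ltac:(lia) ltac:(lia) ltac:(lia)) (cj_F s.+1 s.+1 j ltac:(rg) ltac:(lia) ltac:(lia) ltac:(lia))).
  by congr (_ *: _); kscal.
- rewrite (cjP' (cj_F s s.+1 j ltac:(rg) ltac:(lia) ltac:(lia) ltac:(lia)) (cj_F s.+1 s.+1 j ltac:(rg) ltac:(lia) ltac:(lia) ltac:(lia))).
  by congr (_ *: _); kscal.
- rewrite /Z /Zb (cjWP' cjs_e cjj_e); first by rewrite div1r invrK.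
  by apply: e_E => //; rg.
- rewrite /Z /Zb (cjWP' cjs_f cjj_f); first by rewrite div1r.
  by apply: f_E => //; rg.
- by rewrite /Z -scalerAr -scalerAl (cjP cjZ1 cjZ2) divr1 scale1r.
- by rewrite /Z -scalerAr -scalerAl (cjP' cjZ1 cjZ2) divr1 scale1r.
Qed.

Lemma Main1 j t k : forall i s, s = (i + k.+1)%N -> (1 <= i)%N -> (s < j)%N -> (j < t)%N -> (t <= m + n)%N ->
  scomm (par m i j) (par m s t) (E i j) (Fi s t) =
  ((Q j)^-1 - Q j) *: (K s * Kinv j * Fi j t * E i s).
Proof.
elim: k => [|k IH] i s hs hi hsj hjt ht.
  rewrite addn1 in hs; subst s.
  rewrite Erec; last by lia.
  rewrite scommE.
  have -> : (par m i j && par m i.+1 t) = (par m i.+1 j && par m i.+1 t) by rewrite /par; lia.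
  have hY := L1 (j - i.+2) i.+1 j t ltac:(lia) ltac:(lia) hjt ht.
  rewrite scommE in hY.
  have hc : e i * Fi i.+1 t = Fi i.+1 t * e i by apply: e_F => //; rg.
  rewrite (@mainE _ _ (e i) (E i.+1 j) (Fi i.+1 t) _ ((Q i.+1)^-1) _ hc hY) Ebase.
  have cj1 : cj i.+1 (e i) (Q i.+1)^-1 by apply: cj_eq; [apply: cj_e; rg | kscal].
  have cj2 : cj j (e i) 1 by apply: cj_eq; [apply: cj_e; rg | kscal].
  have hW : e i * Fi j t = Fi j t * e i by apply: e_F => //; rg.
  have := @cjPW _ _ _ _ 1 _ _ cj1 cj2 hW; rewrite !scale1r divr1 => hZ.
  apply: fin1 => //; first exact: Q_neq0.
  by rewrite divfK ?D_neq0.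
have hsi : (i.+1 < s)%N by lia.
rewrite Erec; last by lia.
rewrite scommE.
have -> : (par m i j && par m s t) = (par m i.+1 j && par m s t) by rewrite /par; lia.
have hY := IH i.+1 s ltac:(lia) ltac:(lia) hsj hjt ht.
rewrite scommE in hY.
have hc : e i * Fi s t = Fi s t * e i by apply: e_F => //; rg.
rewrite (@mainE _ _ (e i) (E i.+1 j) (Fi s t) _ ((Q i.+1)^-1) _ hc hY).
rewrite (Erec i s hsi).
have cj1 : cj s (e i) 1 by apply: cj_eq; [apply: cj_e; rg | kscal].
have cj2 : cj j (e i) 1 by apply: cj_eq; [apply: cj_e; rg | kscal].
have hW : e i * Fi j t = Fi j t * e i by apply: e_F => //; rg.
have := @cjPW _ _ _ _ 1 _ _ cj1 cj2 hW; rewrite !scale1r divr1 scale1r => hZ.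
by apply: fin2; rewrite hZ.
Qed.

Lemma Main2 j t k : forall i s, s = (i + k.+1)%N -> (1 <= i)%N -> (s < j)%N -> (j < t)%N -> (t <= m + n)%N ->
  scomm (par m s t) (par m i j) (E s t) (Fi i j) =
  (Q j - (Q j)^-1) *: (Fi i s * E j t * Kinv s * K j).
Proof.
elim: k => [|k IH] i s hs hi hsj hjt ht.
  rewrite addn1 in hs; subst s.
  rewrite Frec; last by lia.
  rewrite scommE.
  have -> : (par m i.+1 t && par m i j) = (par m i.+1 t && par m i.+1 j) by rewrite /par; lia.
  have hY := L2 (j - i.+2) i.+1 j t ltac:(lia) ltac:(lia) hjt ht.
  rewrite scommE in hY.
  have hc : f i * E i.+1 t = E i.+1 t * f i by apply: f_E => //; rg.
  rewrite (@mainF _ _ (f i) (Fi i.+1 j) (E i.+1 t) _ (Q i.+1) _ hc hY) Fbase.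
  have cj1 : cj i.+1 (f i) (Q i.+1) by apply: cj_eq; [apply: cj_f; rg | kscal].
  have cj2 : cj j (f i) 1 by apply: cj_eq; [apply: cj_f; rg | kscal].
  have hW : f i * E j t = E j t * f i by apply: f_E => //; rg.
  have := @cjWP' _ _ _ _ 1 _ _ cj1 cj2 hW; rewrite !scale1r div1r => hZ.
  have assoc3 : forall X, X * E j t * Kinv i.+1 * K j = X * (E j t * Kinv i.+1 * K j) by move=> X; rewrite !mulrA.
  rewrite assoc3.
  apply: fin3 => //; first exact: Q_neq0.
  rewrite -[(Q i.+1)^-1 - Q i.+1]opprB mulrN divfK ?D_neq0 //.
  by rewrite opprB.
have hsi : (i.+1 < s)%N by lia.
rewrite Frec; last by lia.
rewrite scommE.
have -> : (par m s t && par m i j) = (par m s t && par m i.+1 j) by rewrite /par; lia.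
have hY := IH i.+1 s ltac:(lia) ltac:(lia) hsj hjt ht.
rewrite scommE in hY.
have hc : f i * E s t = E s t * f i by apply: f_E => //; rg.
rewrite (@mainF _ _ (f i) (Fi i.+1 j) (E s t) _ (Q i.+1) _ hc hY).
rewrite (Frec i s hsi).
have cj1 : cj s (f i) 1 by apply: cj_eq; [apply: cj_f; rg | kscal].
have cj2 : cj j (f i) 1 by apply: cj_eq; [apply: cj_f; rg | kscal].
have hW : f i * E j t = E j t * f i by apply: f_E => //; rg.
have := @cjWP' _ _ _ _ 1 _ _ cj1 cj2 hW; rewrite !scale1r divr1 scale1r => hZ.
have assoc3 : forall X, X * E j t * Kinv s * K j = X * (E j t * Kinv s * K j) by move=> X; rewrite !mulrA.
rewrite !assoc3.
by apply: fin4.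
Qed.

End M.

Theorem lemma4p3 (C : numClosedFieldType) (m n : nat) (hm : (1 <= m)%N) (hn : (1 <= n)%N)
  (A : algType (Cq C)) (K Kinv e f : nat -> A)
  (hrel : Uq_relations (qind C) m n e f K Kinv)
  (i s j t : nat) (hi : (1 <= i)%N) (his : (i < s)%N) (hsj : (s < j)%N) (hjt : (j < t)%N)
  (ht : (t <= m + n)%N) :
  scomm (par m i j) (par m s t) (Eij (qind C) m e i j) (Fij (qind C) m f s t) =
    ((qi (qind C) m j)^-1 - qi (qind C) m j) *:
      (K s * Kinv j * Fij (qind C) m f j t * Eij (qind C) m e i s) /\
  scomm (par m s t) (par m i j) (Eij (qind C) m e s t) (Fij (qind C) m f i j) =
    (qi (qind C) m j - (qi (qind C) m j)^-1) *:
      (Fij (qind C) m f i s * Eij (qind C) m e j t * Kinv s * K j).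
Proof.
split.
- by apply: (@Main1 C m n A K Kinv e f hrel j t (s - i - 1) i s) => //; lia.
- by apply: (@Main2 C m n A K Kinv e f hrel j t (s - i - 1) i s) => //; lia.
Qed.
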